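(* For every positive integer $n$, the Wiener indices of the spiro ortho-chain $O_n$, the spiro meta-chain $M_n$ and the spiro para-chain $P_n$ are $$W(O_n)=\frac{25}{6}n^3+\frac{65}{2}n^2-\frac{29}{3}n,\quad W(M_n)=\frac{25}{3}n^3+20n^2-\frac{4}{3}n,\quad W(P_n)=\frac{25}{2}n^3+\frac{15}{2}n^2+7n.$$
   Context: The Wiener index is $W(G)=\sum_{\{u,v\}\subseteq V(G)}d_G(u,v)$, $d_G$ the shortest-path distance. A spiro hexagonal chain of length $n$, $G_n=H_0H_1\cdots H_{n-1}$, is a connected graph in which every block is a hexagon (6-cycle) $H_0,\dots,H_{n-1}$, each hexagon has at most two cut-vertices, each cut-vertex is shared by exactly two hexagons, and for $k=1,\dots,n-1$ the hexagons $H_{k-1}$ and $H_k$ share the cut-vertex $c_k$. For $k\ge1$, a vertex of $H_k$ at distance $1$, $2$, $3$ from $c_k$ is called an ortho-, meta-, para-vertex of $H_k$, denoted $o_k,m_k,p_k$. The spiro ortho-chain $O_n$ is the spiro hexagonal chain with $c_k=o_{k-1}$ for all $2\le k\le n-1$; the spiro meta-chain $M_n$ has $c_k=m_{k-1}$ and the spiro para-chain $P_n$ has $c_k=p_{k-1}$ for all $2\le k\le n-1$ (for $n\le2$ these conditions are vacuous). *)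

(* Defs.v *)
From mathcomp Require Import all_boot all_order all_algebra.
Set Implicit Arguments. Unset Strict Implicit. Unset Printing Implicit Defensive.

Definition walk_of_len (T : finType) (e : rel T) (m : nat) (u v : T) : bool :=
  [exists p : m.-tuple T, path e u p && (last u p == v)].

(* Shortest-path distance: the least m with a walk of length m from u to v
   (a shortest walk is a path, so it has length < #|T|); for connected graphs
   this is exactly d_G(u,v). *)
Definition gdist (T : finType) (e : rel T) (u v : T) : nat :=
  find (fun m => walk_of_len e m u v) (iota 0 #|T|).

Definition wiener (N : nat) (e : rel 'I_N) : nat :=
  \sum_(u : 'I_N) \sum_(v : 'I_N | (u < v)%N) gdist e u v.

(** Vertices are 0 .. 5n.  Hexagon H_0 has vertices 0,1,...,5 in cyclic order.
  For k >= 1, hexagon H_k has, in cyclic order, the vertices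
     c_k, 5k+1, 5k+2, 5k+3, 5k+4, 5k+5,
  i.e. position p (0 <= p <= 5) of H_k is the vertex at cyclic position p
  counting from the cut vertex c_k (position 0).  The cut vertex c_1 is the
  vertex 0 of H_0 (no loss of generality: H_0 has no other constraint), and
  for k >= 1 the cut vertex c_(k+1) is the vertex at position  s k  of H_k,
  where s k is in {1,...,5}.  Every spiro hexagonal chain of length n is
  isomorphic to one of these graphs for some choice of s. *)

Definition cutv (s : nat -> nat) (k : nat) : nat :=
  if k == 1 then 0 else 5 * k.-1 + s k.-1.

Definition hexv (s : nat -> nat) (k p : nat) : nat :=
  if k == 0 then p else if p == 0 then cutv s k else 5 * k + p.

Definition spiro_adj (n : nat) (s : nat -> nat) : rel 'I_(5 * n + 1) :=
  fun u v =>
    [exists k : 'I_n, exists p : 'I_6,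
      ((hexv s k p == u) && (hexv s k (p.+1 %% 6) == v))
      || ((hexv s k p == v) && (hexv s k (p.+1 %% 6) == u))].

(* s describes a legal spiro chain of length n: c_(k+1) != c_k. *)
Definition spiro_choice (n : nat) (s : nat -> nat) : Prop :=
  forall k, (1 <= k)%N -> (k.+2 <= n)%N -> (1 <= s k <= 5)%N.

(* Distance (along H_k) of position s k from c_k is 1 / 2 / 3:
   c_(k+1) = o_k, m_k, p_k respectively, for 1 <= k <= n-2. *)
Definition ortho_choice (n : nat) (s : nat -> nat) : Prop :=
  forall k, (1 <= k)%N -> (k.+2 <= n)%N -> s k = 1%N \/ s k = 5%N.
Definition meta_choice (n : nat) (s : nat -> nat) : Prop :=
  forall k, (1 <= k)%N -> (k.+2 <= n)%N -> s k = 2%N \/ s k = 4%N.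
Definition para_choice (n : nat) (s : nat -> nat) : Prop :=
  forall k, (1 <= k)%N -> (k.+2 <= n)%N -> s k = 3%N.

Arguments spiro_adj : clear implicits.

(* Main.v *)
Require Import Defs.
From mathcomp Require Import all_boot all_order all_algebra.
From mathcomp Require Import zify ring lra.

Definition hd (p q : nat) : nat := let d := (6 + p - q) %% 6 in minn d (6 - d).


Lemma hd_sym p q : p < 6 -> q < 6 -> hd p q = hd q p.
Proof. by move: p => [|[|[|[|[|[|p]]]]]]; move: q => [|[|[|[|[|[|q]]]]]]. Qed.
Lemma hd_self p : p < 6 -> hd p p = 0.
Proof. by move: p => [|[|[|[|[|[|p]]]]]]. Qed.
Lemma hd_le3 p q : hd p q <= 3.
Proof. rewrite /hd; lia. Qed.
Lemma hd_lip p t : p < 6 -> t < 6 ->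
  hd p t <= hd (p.+1 %% 6) t + 1 /\ hd (p.+1 %% 6) t <= hd p t + 1.
Proof. by move: p => [|[|[|[|[|[|p]]]]]]; move: t => [|[|[|[|[|[|t]]]]]]. Qed.
Lemma hd_desc p t : p < 6 -> t < 6 -> 0 < hd p t ->
  hd (p.+1 %% 6) t = (hd p t).-1 \/ hd ((p + 5) %% 6) t = (hd p t).-1.
Proof. move: p => [|[|[|[|[|[|p]]]]]]; move: t => [|[|[|[|[|[|t]]]]]]; try by []; move=> _ _ _; ((left; done) || (right; done)). Qed.
Lemma hd_eq0 p t : p < 6 -> t < 6 -> hd p t = 0 -> p = t.
Proof. by move: p => [|[|[|[|[|[|p]]]]]]; move: t => [|[|[|[|[|[|t]]]]]]. Qed.
Lemma hd_sum c : c < 6 -> hd 1 c + hd 2 c + hd 3 c + hd 4 c + hd 5 c = 9 - hd 0 c.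
Proof. by move: c => [|[|[|[|[|[|c]]]]]]. Qed.
Lemma p5mod p : p < 6 -> ((p + 5) %% 6).+1 %% 6 = p.
Proof. by move: p => [|[|[|[|[|[|p]]]]]]. Qed.

Definition blk (x : nat) := x.-1 %/ 5.
Definition pos (x : nat) := if x == 0 then 0 else x.-1 %% 5 + 1.
Definition cp (s : nat -> nat) k := if k == 0 then 0 else s k %% 6.
Definition G s a b := \sum_(a <= j < b) hd 0 (cp s j).
Definition E s k p y :=
  if k == blk y then hd p (pos y)
  else if k < blk y then hd p (cp s k) + G s k.+1 (blk y) + hd 0 (pos y)
  else hd (pos y) (cp s (blk y)) + G s (blk y).+1 k + hd 0 p.
Definition D s x y := E s (blk x) (pos x) y.

Definition SC (n : nat) (s : nat -> nat) :=
  forall k, 1 <= k -> k.+2 <= n -> 0 < s k <= 5.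

Lemma pos_lt6 x : pos x < 6.
Proof. rewrite /pos; case: eqP => _; lia. Qed.
Lemma cp_lt6 s k : cp s k < 6.
Proof. rewrite /cp; case: eqP => _; lia. Qed.
Lemma decomp x : x = 5 * blk x + pos x.
Proof. rewrite /blk /pos; case: eqP => [->//|]; lia. Qed.
Lemma pos0 x : pos x = 0 -> x = 0.
Proof. rewrite /pos; case: eqP => //; lia. Qed.
Lemma blkpos n p : 0 < p <= 5 -> blk (p + 5 * n) = n /\ pos (p + 5 * n) = p.
Proof. rewrite /blk /pos; case: eqP; lia. Qed.
Lemma blk_small p : p < 6 -> blk p = 0 /\ pos p = p.
Proof. rewrite /blk /pos; case: eqP; lia. Qed.

Lemma G_nil s a b : b <= a -> G s a b = 0.
Proof. by move=> h; rewrite /G big_geq. Qed.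
Lemma G_l s a b : a < b -> G s a b = hd 0 (cp s a) + G s a.+1 b.
Proof. by move=> h; rewrite /G big_ltn. Qed.
Lemma G_r s a b : a <= b -> G s a b.+1 = G s a b + hd 0 (cp s b).
Proof. by move=> h; rewrite /G big_nat_recr. Qed.
Lemma G_le s a b : G s a b <= 3 * (b - a).
Proof.
rewrite /G; apply: leq_trans (_ : \sum_(a <= j < b) 3 <= _).
  by apply: leq_sum => i _; apply: hd_le3.
by rewrite sum_nat_const_nat mulnC.
Qed.

Lemma E_shift s k y : E s k (cp s k) y = E s k.+1 0 y.
Proof.
have hc := cp_lt6 s k; have hq := pos_lt6 y.
rewrite /E; case: (ltngtP k (blk y)) => h; case: (ltngtP k.+1 (blk y)) => h2; try lia.
all: rewrite ?hd_self //.
- by rewrite (G_l _ _ _ h2) add0n.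
- rewrite G_nil; [by rewrite add0n | lia].
- rewrite G_r ?addn0 //; lia.
- have e : blk y = k by lia.
  rewrite e G_nil; last lia. have := hd_sym _ _ hc hq; lia.
Qed.


Lemma D_hexv n s k p y : SC n s -> k < n -> p < 6 ->
  D s (hexv s k p) y = E s k p y.
Proof.
move=> hs hk hp; rewrite /D /hexv.
case: eqP => [->|k0].
  by have [-> ->] := blk_small _ hp.
case: eqP => [p0|p0].
  rewrite p0 /cutv; case: eqP => [->|k1].
    by rewrite (_ : blk 0 = 0) // (_ : pos 0 = 0) // -(E_shift s 0 y).
  have hsk := hs k.-1 ltac:(lia) ltac:(lia).
  rewrite addnC; have [-> ->] := blkpos k.-1 _ hsk.
  have -> : s k.-1 = cp s k.-1.
    rewrite /cp; case: eqP => [|_]; [lia | rewrite modn_small //; lia].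
  by rewrite E_shift prednK //; lia.
rewrite addnC; have [-> ->] // := blkpos k p ltac:(lia).
Qed.

Lemma hexv_lt n s k p : SC n s -> k < n -> p < 6 -> hexv s k p < 5 * n + 1.
Proof.
move=> hs hk hp; rewrite /hexv /cutv.
case: eqP => [_|k0]; first lia.
case: eqP => [_|p0]; last lia.
case: eqP => [_|k1]; first lia.
have := hs k.-1 ltac:(lia) ltac:(lia); lia.
Qed.

Lemma vert_hexv n s x : 0 < n -> x < 5 * n + 1 -> blk x < n /\ hexv s (blk x) (pos x) = x.
Proof.
move=> hn hx; split.
  rewrite /blk; move: hx; case: x => [|x] /= hx; lia.
rewrite /hexv; case: eqP => [b0|b0].
  by rewrite [RHS]decomp b0 muln0.
case: eqP => [p0|p0]; first by have x0 := pos0 _ p0; rewrite x0 in b0.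
by rewrite [RHS]decomp.
Qed.

Lemma mod6_lt p : p %% 6 < 6.
Proof. by rewrite ltn_pmod. Qed.

Lemma adj_hexv n s (u w : 'I_(5 * n + 1)) k p : k < n -> p < 6 ->
  val u = hexv s k p -> val w = hexv s k (p.+1 %% 6) ->
  spiro_adj n s u w && spiro_adj n s w u.
Proof.
move=> hk hp hu hw; rewrite /spiro_adj; apply/andP; split;
  apply/existsP; exists (Ordinal hk); apply/existsP; exists (Ordinal hp);
  by rewrite /= -hu -hw !eqxx ?orbT.
Qed.

Lemma adj_inv n s (u w : 'I_(5 * n + 1)) : spiro_adj n s u w ->
  exists k p, [/\ k < n, p < 6 &
   (val u = hexv s k p /\ val w = hexv s k (p.+1 %% 6)) \/
   (val w = hexv s k p /\ val u = hexv s k (p.+1 %% 6))].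
Proof.
case/existsP => k /existsP [p] /orP [/andP [/eqP h1 /eqP h2]|/andP [/eqP h1 /eqP h2]];
  exists k, p; split => //; [left|right]; by split.
Qed.

Lemma E_lip s k p y : p < 6 ->
  E s k p y <= E s k (p.+1 %% 6) y + 1 /\ E s k (p.+1 %% 6) y <= E s k p y + 1.
Proof.
move=> hp.
have h1 := hd_lip p (pos y) hp (pos_lt6 y).
have h2 := hd_lip p (cp s k) hp (cp_lt6 s k).
have h3 := hd_lip p 0 hp isT.
rewrite /E (hd_sym 0 p) // (hd_sym 0 (p.+1 %% 6)) ?mod6_lt //.
case: ifP => _; [|case: ifP => _]; lia.
Qed.

Lemma D_lip n s (u w : 'I_(5 * n + 1)) y : SC n s -> spiro_adj n s u w ->
  D s u y <= D s w y + 1.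
Proof.
move=> hs /adj_inv [k [p [hk hp [[hu hw]|[hw hu]]]]];
  rewrite hu hw !(D_hexv _ _ _ _ _ hs hk) ?mod6_lt //; have := E_lip s k _ y hp; lia.
Qed.

Arguments hd_desc {p t}.
Arguments hexv_lt {n s k p}.
Arguments adj_hexv {n s u w k p}.
Lemma step n s (u : 'I_(5 * n + 1)) K P y t C : SC n s -> K < n -> P < 6 -> t < 6 ->
  val u = hexv s K P -> (forall P', P' < 6 -> E s K P' y = hd P' t + C) ->
  0 < hd P t -> exists w : 'I_(5 * n + 1), spiro_adj n s u w && (D s w y == (hd P t).-1 + C).
Proof.
move=> hs hK hP ht hu hE hpos.
case: (hd_desc hP ht hpos) => h.
- have hw := hexv_lt hs hK (mod6_lt P.+1).
  exists (Ordinal hw); have /andP [-> _] := adj_hexv (w := Ordinal hw) hK hP hu erefl.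
  by rewrite /= (D_hexv _ _ _ _ _ hs hK) ?mod6_lt // hE ?mod6_lt // h.
- have hw := hexv_lt hs hK (mod6_lt (P + 5)).
  exists (Ordinal hw).
  have /andP [_ ->] := adj_hexv (u := Ordinal hw) (w := u) hK (mod6_lt (P + 5)) erefl
    ltac:(by rewrite p5mod).
  by rewrite /= (D_hexv _ _ _ _ _ hs hK) ?mod6_lt // hE ?mod6_lt // h.
Qed.

Lemma hd0_pos c : 0 < c < 6 -> 0 < hd 0 c.
Proof. by case/andP; move: c => [|[|[|[|[|[|c]]]]]]. Qed.

Arguments hd_eq0 {p t}.
Arguments step {n s u K P y t C}.
Lemma fin_aux n s (u : 'I_(5 * n + 1)) y a b :
  (exists w, spiro_adj n s u w && (D s w y == a.-1 + b)) -> 0 < a ->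
  exists w, spiro_adj n s u w && (D s w y == (a + b).-1).
Proof.
move=> [w /andP [hw /eqP hd']] ha; exists w; rewrite hw hd' /=; apply/eqP; lia.
Qed.

Lemma descent n s (u : 'I_(5 * n + 1)) y : 0 < n -> SC n s -> y < 5 * n + 1 ->
  0 < D s u y -> exists w : 'I_(5 * n + 1), spiro_adj n s u w && (D s w y == (D s u y).-1).
Proof.
move=> hn hs hy.
have [hk hu] := vert_hexv n s _ hn (ltn_ord u).
have [hl _] := vert_hexv n s _ hn hy.
have hp := pos_lt6 u. have hq := pos_lt6 y.
have hp0 : pos u = 0 -> blk u = 0 by move=> h; rewrite (pos0 _ h).
rewrite /D; move: hk hu hp hp0; move: (blk u) (pos u) => k p hk hu hp hp0 hpos.
case: (ltngtP k (blk y)) => hkl.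
-
  have [hz|hz] := eqVneq (hd p (cp s k)) 0.
  + have pe := hd_eq0 hp (cp_lt6 s k) hz.
    have hu' : nat_of_ord u = hexv s k.+1 0.
      rewrite -hu /hexv /cutv /=; case: eqP => [k0|k0].
        by rewrite pe k0.
      have := hs k ltac:(lia) ltac:(lia) => hsk.
      have e : p = s k.
        rewrite pe /cp; case: eqP => [|_]; [lia | rewrite modn_small //; lia].
      rewrite e; case: ifP => [/eqP|_]; first lia.
      by case: ifP => [/eqP|_]; first lia.
    have hK : k.+1 < n by lia.
    rewrite pe E_shift in hpos *.
    have [hl1|hl1] := eqVneq (blk y) k.+1.
    * have hE : forall P', P' < 6 -> E s k.+1 P' y = hd P' (pos y) + 0.
        by move=> P' _; rewrite /E; case: ifP => ?; [|case: ifP => ?]; lia.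
      have hpos' : 0 < hd 0 (pos y) by move: hpos; rewrite (hE 0) // addn0.
      move: (step hs hK (isT : 0 < 6) hq hu' hE hpos'); rewrite (hE 0) // in hpos *; by move/fin_aux; apply.
    * have hl2 : k.+1 < blk y by rewrite ltn_neqAle eq_sym hl1 /=; exact: hkl.
      have hsk := hs k.+1 ltac:(lia) ltac:(lia).
      have hE : forall P', P' < 6 ->
          E s k.+1 P' y = hd P' (cp s k.+1) + (G s k.+2 (blk y) + hd 0 (pos y)).
        by move=> P' _; rewrite /E; case: ifP => ?; [|case: ifP => ?]; lia.
      have hpos' : 0 < hd 0 (cp s k.+1).
        by apply: hd0_pos; rewrite /cp /= modn_small; lia.
      move: (step hs hK (isT : 0 < 6) (cp_lt6 s k.+1) hu' hE hpos'); rewrite (hE 0) // in hpos *; by move/fin_aux; apply.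
  + have hE : forall P', P' < 6 ->
        E s k P' y = hd P' (cp s k) + (G s k.+1 (blk y) + hd 0 (pos y)).
      by move=> P' _; rewrite /E; case: ifP => ?; [|case: ifP => ?]; lia.
    have hpos' : 0 < hd p (cp s k) by rewrite lt0n.
    move: (step hs hk hp (cp_lt6 s k) (esym hu) hE hpos'); rewrite (hE p) // in hpos *; by move/fin_aux; apply.
-
  have hE : forall P', P' < 6 ->
      E s k P' y = hd P' 0 + (hd (pos y) (cp s (blk y)) + G s (blk y).+1 k).
    move=> P' hP'; rewrite /E (hd_sym 0 P') //.
    by case: ifP => ?; [|case: ifP => ?]; lia.
  have hpos' : 0 < hd p 0.
    have [p0|p0] := eqVneq p 0.
      by have := hp0 p0; lia.
    by rewrite lt0n; apply/eqP => /(hd_eq0 hp (isT : 0 < 6)) /eqP; rewrite (negPf p0).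
  move: (step hs hk hp (isT : 0 < 6) (esym hu) hE hpos'); rewrite (hE p) // in hpos *; by move/fin_aux; apply.
-
  have hE : forall P', P' < 6 -> E s k P' y = hd P' (pos y) + 0.
    by move=> P' _; rewrite /E; case: ifP => ?; [|case: ifP => ?]; lia.
  have hpos' : 0 < hd p (pos y) by rewrite (hE p) // addn0 in hpos.
  move: (step hs hk hp hq (esym hu) hE hpos'); rewrite (hE p) // in hpos *; by move/fin_aux; apply.
Qed.

Lemma D_self s y : D s y y = 0.
Proof. by rewrite /D /E eqxx hd_self // pos_lt6. Qed.

Lemma D_zero s x y : D s x y = 0 -> x = y.
Proof.
have hx := pos_lt6 x; have hy := pos_lt6 y.
rewrite /D /E; case: ifP => [/eqP hb|hne].
  move/(hd_eq0 hx hy) => hp; by rewrite (decomp x) (decomp y) hb hp.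
case: ifP => hb h.
  have : hd 0 (pos y) = 0 by lia.
  move/(hd_eq0 (isT : 0 < 6) hy) => /esym /pos0 y0.
  by move: hb; rewrite y0.
have : hd 0 (pos x) = 0 by lia.
move/(hd_eq0 (isT : 0 < 6) hx) => /esym /pos0 x0.
  have b0 : blk x = 0 by rewrite x0.
  lia.
Qed.

Lemma D_bound n s x y : blk x < n -> blk y < n -> D s x y <= 3 * n.
Proof.
move=> hx hy; rewrite /D /E.
have := hd_le3 (pos x) (pos y); have := hd_le3 (pos x) (cp s (blk x)).
have := hd_le3 0 (pos y); have := hd_le3 (pos y) (cp s (blk y)).
have := hd_le3 0 (pos x).
have := G_le s (blk x).+1 (blk y); have := G_le s (blk y).+1 (blk x).
case: ifP => ?; [|case: ifP => ?]; lia.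
Qed.

Lemma gdist_char (T : finType) (e : rel T) (d : T -> T -> nat) :
  (forall y, d y y = 0) -> (forall x y, d x y = 0 -> x = y) ->
  (forall u w y, e u w -> d u y <= d w y + 1) ->
  (forall u y, 0 < d u y -> exists w, e u w && (d w y == (d u y).-1)) ->
  (forall u y, d u y < #|T|) -> forall u v, gdist e u v = d u v.
Proof.
move=> d0 dz dlip ddesc dlt u v.
have low : forall m, walk_of_len e m u v -> d u v <= m.
  move=> m /existsP [p /andP [hp /eqP hl]].
  rewrite -(size_tuple p) -hl.
  elim: (tval p) u hp {hl} => [|w q IH] x /=; first by rewrite d0.
  case/andP => hxw hq; have := dlip x w (last w q) hxw; have := IH w hq; lia.
have up : forall m x, d x v = m -> walk_of_len e m x v.
  elim=> [|m IH] x hx.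
    rewrite (dz _ _ hx); apply/existsP; exists [tuple]; by rewrite /= eqxx.
  have [|w /andP [hxw /eqP hw]] := ddesc x v; first by rewrite hx.
  rewrite hx /= in hw.
  have /existsP [p /andP [hp hl]] := IH w hw.
  apply/existsP; exists [tuple of w :: p]; by rewrite /= hxw hp.
rewrite /gdist.
have hlt := dlt u v.
rewrite -(subnKC (ltnW hlt)) iotaD find_cat.
have -> : has (fun m => walk_of_len e m u v) (iota 0 (d u v)) = false.
  apply/hasPn => m; rewrite mem_iota add0n => /andP [_ hm].
  by apply/negP => /low; rewrite leqNgt hm.
rewrite size_iota add0n.
case hk: (#|T| - d u v) => [|k]; first lia.
by rewrite /= (up _ _ erefl) addn0.
Qed.

Lemma gdist_spiro n s (u v : 'I_(5 * n + 1)) : 0 < n -> SC n s ->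
  gdist (spiro_adj n s) u v = D s u v.
Proof.
move=> hn hs.
apply: (@gdist_char _ _ (fun a b : 'I_(5 * n + 1) => D s a b)).
- by move=> y; apply: D_self.
- by move=> x y /D_zero /val_inj.
- by move=> a w y; apply: D_lip.
- by move=> a y; apply: descent => //; apply: ltn_ord.
- move=> a y; rewrite card_ord.
  have [ha _] := vert_hexv n s _ hn (ltn_ord a).
  have [hy _] := vert_hexv n s _ hn (ltn_ord y).
  have := D_bound n s _ _ ha hy; lia.
Qed.

Definition F s u n := hd (pos u) (cp s (blk u)) + G s (blk u).+1 n.
Definition T s n := \sum_(0 <= u < 1 + 5 * n) F s u n.
Definition R s N := \sum_(0 <= v < N) \sum_(0 <= u < v) D s u v.

Lemma ord_pairs N (f : nat -> nat -> nat) :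
  \sum_(u < N) \sum_(v < N | u < v) f u v = \sum_(0 <= v < N) \sum_(0 <= u < v) f u v.
Proof.
rewrite (eq_bigr (fun u : 'I_N => \sum_(v < N) (if u < v then f u v else 0)));
  last by move=> u _; rewrite big_mkcond.
rewrite exchange_big /= big_mkord; apply: eq_bigr => v _.
rewrite big_mkord (big_ord_widen N (fun u => f u v)); [by rewrite [RHS]big_mkcond | exact: ltnW].
Qed.

Lemma wiener_R n s : 0 < n -> SC n s -> wiener (spiro_adj n s) = R s (5 * n + 1).
Proof.
move=> hn hs; rewrite /wiener.
rewrite (eq_bigr (fun u : 'I_(5 * n + 1) => \sum_(v < 5 * n + 1 | u < v) D s u v)).
  exact: (ord_pairs (5 * n + 1) (D s)).
move=> u _; apply: eq_bigr => v _; exact: gdist_spiro.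
Qed.

Lemma D_last s n u q : u < 1 + 5 * n -> 0 < q <= 5 -> D s u (q + 5 * n) = F s u n + hd 0 q.
Proof.
move=> hu hq; have [bv pv] := blkpos n q hq.
rewrite /D /E bv pv /F.
have : blk u < n \/ (u = 0 /\ n = 0) by rewrite /blk; lia.
case=> [hb|[-> ->]].
  rewrite ifF; last lia. by rewrite hb.
by rewrite /= G_nil.
Qed.

Lemma inner_split s n q : 0 < q <= 5 ->
  \sum_(0 <= u < q + 5 * n) D s u (q + 5 * n) =
  T s n + (1 + 5 * n) * hd 0 q + \sum_(1 <= p < q) hd p q.
Proof.
move=> hq.
rewrite (big_cat_nat _ (n := 1 + 5 * n)) //; last lia.
congr (_ + _).
  rewrite (eq_big_nat _ _ (F2 := fun u => F s u n + hd 0 q)); last first.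
    by move=> u /andP [_ hu]; apply: D_last.
  by rewrite big_split /= sum_nat_const_nat subn0.
rewrite big_addn addnK; apply: eq_big_nat => p /andP [hp1 hp2].
have [bp pp] := blkpos n p ltac:(lia).
have [bq pq] := blkpos n q hq.
by rewrite /D /E bp pp bq pq eqxx.
Qed.

Lemma block s n :
  \sum_(1 + 5 * n <= v < 6 + 5 * n) \sum_(0 <= u < v) D s u v =
  5 * T s n + (1 + 5 * n) * 9 + 18.
Proof.
rewrite big_addn addnK.
rewrite (eq_big_nat _ _ (F2 := fun q => T s n + (1 + 5 * n) * hd 0 q + \sum_(1 <= p < q) hd p q));
  last by move=> q hq; apply: inner_split; lia.
rewrite !big_split /= sum_nat_const_nat -big_distrr /=.
by rewrite unlock.
Qed.

Lemma R_step s n : R s (1 + 5 * n.+1) = R s (1 + 5 * n) + (5 * T s n + (1 + 5 * n) * 9 + 18).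
Proof.
rewrite /R (_ : 1 + 5 * n.+1 = 6 + 5 * n); last lia.
by rewrite (big_cat_nat _ (n := 1 + 5 * n)) //= ?block //; lia.
Qed.

Lemma T_step s n : 0 < n ->
  T s n.+1 = T s n + (1 + 5 * n) * hd 0 (cp s n) + (9 - hd 0 (cp s n)).
Proof.
move=> hn; rewrite /T (_ : 1 + 5 * n.+1 = 6 + 5 * n); last lia.
rewrite (big_cat_nat _ (n := 1 + 5 * n)) //; last lia.
congr (_ + _).
  rewrite (eq_big_nat _ _ (F2 := fun u => F s u n + hd 0 (cp s n))).
    by rewrite big_split /= sum_nat_const_nat subn0.
  move=> u /andP [_ hu]; rewrite /F G_r ?addnA //.
  rewrite /blk; lia.
rewrite big_addn addnK.
rewrite (eq_big_nat _ _ (F2 := fun q => hd q (cp s n))); last first.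
  move=> q hq; rewrite /F; have [-> ->] := blkpos n q ltac:(lia).
  by rewrite G_nil ?addn0.
do 5 rewrite big_ltn //. rewrite big_geq //.
rewrite /=; have := hd_sum _ (cp_lt6 s n); lia.
Qed.

Lemma T0 s : T s 0 = 0.
Proof. by rewrite /T /F /G unlock. Qed.

Lemma T1 s : T s 1 = 9.
Proof. by rewrite /T /F /G unlock. Qed.

Import GRing.Theory Num.Theory.

Definition HC N s h := forall k, 1 <= k -> k.+2 <= N -> hd 0 (cp s k) = h.

Lemma T_closed N s h : HC N s h -> forall n, n.+1 <= N ->
  2 * T s n = 18 * n + 5 * h * (n * n.-1).
Proof.
move=> hh; elim=> [|n IH] hn; first by rewrite T0; lia.
case: n IH hn => [|m] IH hn; first by rewrite T1; lia.
rewrite T_step // (hh m.+1) //.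
have := IH ltac:(lia); have := hd_le3 0 (cp s m.+1); rewrite (hh m.+1) //= => h3 ih.
nia.
Qed.

Lemma fam N s h a b : 0 < a <= 5 -> 0 < b <= 5 -> hd 0 a = h -> hd 0 b = h ->
  (forall k, 1 <= k -> k.+2 <= N -> s k = a \/ s k = b) -> SC N s /\ HC N s h.
Proof.
move=> ha hb ea eb hs; split.
  by move=> k h1 h2; case: (hs k h1 h2) => ->.
move=> k h1 h2; rewrite /cp; case: eqP => [|_]; first lia.
by case: (hs k h1 h2) => ->; rewrite modn_small //; lia.
Qed.

Local Open Scope ring_scope.

Lemma T_closedR N s h : HC N s h -> forall n, (n.+1 <= N)%N ->
  (T s n)%:R = (18 * n%:R + 5 * h%:R * n%:R * (n%:R - 1)) / 2 :> rat.
Proof.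
move=> hh n hn; have := @T_closed N s h hh n hn.
case: n hn => [|m] hn /= e.
  by rewrite T0; field.
have -> : (T s m.+1)%:R = ((2 * T s m.+1)%N)%:R / 2 :> rat.
  by rewrite natrM; field.
rewrite e !natrD !natrM -(natr1 m).
by field.
Qed.

Definition fR (h n : rat) : rat :=
  (25 * h * (n - 1) * n * (2 * n - 1) + (540 - 75 * h) * n * (n - 1) + 324 * n) / 12.

Lemma R_closed N s h : HC N s h -> forall n, (n <= N)%N ->
  (R s (1 + 5 * n))%:R = fR h%:R n%:R :> rat.
Proof.
move=> hh; elim=> [|n IH] hn.
  by rewrite /R /fR unlock /=; field.
rewrite R_step !natrD !natrM IH; last lia.
rewrite (@T_closedR N s h hh n hn) /fR -natr1.
by field.
Qed.





Lemma W_formula n s h : (0 < n)%N -> SC n s -> HC n s h ->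
  (wiener (spiro_adj n s))%:R = fR h%:R n%:R :> rat.
Proof.
move=> hn hs hh; rewrite wiener_R // addnC.
exact: (@R_closed n s h hh n (leqnn n)).
Qed.

Theorem corollary2p3 (n : nat) (s_o s_m s_p : nat -> nat) :
  (0 < n)%N ->
  ortho_choice n s_o -> meta_choice n s_m -> para_choice n s_p ->
  [/\ (wiener (spiro_adj n s_o))%:R
        = 25 / 6 * n%:R ^+ 3 + 65 / 2 * n%:R ^+ 2 - 29 / 3 * n%:R :> rat,
      (wiener (spiro_adj n s_m))%:R
        = 25 / 3 * n%:R ^+ 3 + 20 * n%:R ^+ 2 - 4 / 3 * n%:R :> rat
    & (wiener (spiro_adj n s_p))%:R
        = 25 / 2 * n%:R ^+ 3 + 15 / 2 * n%:R ^+ 2 + 7 * n%:R :> rat].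
Proof.
move=> hn ho hm hp.
have [so ho'] := @fam n s_o 1 1 5 isT isT erefl erefl ho.
have [sm hm'] := @fam n s_m 2 2 4 isT isT erefl erefl hm.
have [sp hp'] := @fam n s_p 3 3 3 isT isT erefl erefl
  (fun k h1 h2 => or_introl (hp k h1 h2)).
rewrite (W_formula _ _ _ hn so ho') (W_formula _ _ _ hn sm hm') (W_formula _ _ _ hn sp hp') /fR.
by split; field.
Qed.
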